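(* Let $\alpha>0$, $g,h\in\mathbb{R}$ with $h>g$, $F_0\in(0,1)$, $X_0\in\mathbb{R}$, and define the quantile function $X:(0,1)\to\mathbb{R}$ by $$X(F)=X_0+\frac{1}{\alpha}\int_{F_0}^{F}\frac{d\xi}{\xi^g-\xi^h}.$$ Then: (i) if $g\geq 1$, $\lim_{F\to 0^+}X(F)=-\infty$ (infinite left tail); (ii) if $g<1$, $\lim_{F\to 0^+}X(F)$ is finite and equals $$X_0-\frac{F_0^{\lambda}}{\alpha\lambda}\left(1+\frac{\lambda F_0^{\gamma}}{\gamma}\,\Phi\!\left[F_0^{\gamma},1,1+\frac{\lambda}{\gamma}\right]\right),$$ where $\gamma=h-g$ and $\lambda=1-g$; (iii) for all such parameters, $\lim_{F\to 1^-}X(F)=+\infty$ (infinite right tail).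
   Context: Lerch's transcendent is $\Phi[z,s,v]=\sum_{n=0}^{\infty}\frac{z^n}{(v+n)^s}$ for $|z|<1$, $v\notin\{0,-1,-2,\dots\}$. The function $X(F)$ is the inverse of the S-distribution cumulative $F$ solving $dF/dX=\alpha(F^g-F^h)$, $F(X_0)=F_0$. *)

(* Defs.v *)
From Stdlib Require Import Reals.
From Coquelicot Require Import Coquelicot.
Open Scope R_scope.

(* Lerch transcendent Phi[z,s,v] = sum_{n>=0} z^n / (v+n)^s,
   used here for |z|<1 and v > 0 (so (v+n)^s = Rpower (v+n) s is the real power). *)
Definition LerchPhi (z s v : R) : R :=
  Series (fun n : nat => z ^ n / Rpower (v + INR n) s).

Definition Squantile (alpha g h F0 X0 : R) (F : R) : R :=
  X0 + / alpha * RInt (fun xi => / (Rpower xi g - Rpower xi h)) F0 F.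

(* Main.v *)
Require Import Defs.
From Stdlib Require Import Reals Lra.
From Coquelicot Require Import Coquelicot.
Open Scope R_scope.

Lemma ln_neg x : 0 < x < 1 -> ln x < 0.
Proof. intros [H1 H2]. rewrite <- ln_1. apply ln_increasing; lra. Qed.

Lemma Rpower_pos x a : 0 < Rpower x a.
Proof. unfold Rpower; apply exp_pos. Qed.

Lemma Rpower_lt_small x a b : 0 < x < 1 -> a < b -> Rpower x b < Rpower x a.
Proof. intros Hx Hab. unfold Rpower. apply exp_increasing.
  pose proof (ln_neg x Hx). nra. Qed.

Lemma Rpower_le_small x a b : 0 < x < 1 -> a <= b -> Rpower x b <= Rpower x a.
Proof. intros Hx Hab. destruct (Req_dec a b). subst; lra.
  left; apply Rpower_lt_small; lra. Qed.

Definition fq (g h : R) (x : R) := / (Rpower x g - Rpower x h).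

Lemma D_pos g h x : g < h -> 0 < x < 1 -> 0 < Rpower x g - Rpower x h.
Proof. intros. pose proof (Rpower_lt_small x g h H0 H). lra. Qed.

Lemma fq_cont g h x : g < h -> 0 < x < 1 -> continuous (fq g h) x.
Proof. intros Hgh Hx. apply (ex_derive_continuous (K:=R_AbsRing) (V:=R_NormedModule)).
  pose proof (D_pos g h x Hgh Hx). unfold fq, Rpower in *.
  auto_derive. repeat split; try lra. Qed.

Lemma fq_ex_RInt g h a b : g < h -> 0 < a < 1 -> 0 < b < 1 -> ex_RInt (fq g h) a b.
Proof. intros. apply (ex_RInt_continuous (V:=R_CompleteNormedModule)). intros z Hz. apply fq_cont; auto.
  split. eapply Rlt_le_trans; [|apply Hz]. apply Rmin_case; lra.
  eapply Rle_lt_trans; [apply Hz|]. apply Rmax_case; lra. Qed.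

Lemma aff_m c k : 0 < k -> filterlim (fun y => c + k * y) (Rbar_locally m_infty) (Rbar_locally m_infty).
Proof. intros Hk P [M HM]. exists ((M - c) / k). intros y Hy. apply HM.
  assert (E: k * ((M - c)/k) = M - c) by (field; lra). nra. Qed.

Lemma aff_p c k : k < 0 -> filterlim (fun y => c + k * y) (Rbar_locally m_infty) (Rbar_locally p_infty).
Proof. intros Hk P [M HM]. exists ((M - c) / k). intros y Hy. apply HM.
  assert (E: k * ((M - c)/k) = M - c) by (field; lra). nra. Qed.

Lemma part1 (alpha g h F0 X0 : R)
  (Halpha : 0 < alpha) (Hgh : g < h) (HF0 : 0 < F0 < 1) :
  1 <= g ->
     filterlim (Squantile alpha g h F0 X0) (at_right 0) (Rbar_locally m_infty).
Proof.
  intros Hg.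
  apply filterlim_le_m_infty with (f := fun F => (X0 - / alpha * ln F0) + / alpha * ln F).
  - exists (mkposreal F0 (proj1 HF0)). intros F HF HF'.
    assert (HF1 : F < F0). { unfold ball in HF; simpl in HF; unfold AbsRing_ball in HF; simpl in HF.
      apply Rabs_lt_between in HF. unfold minus, plus, opp in HF; simpl in HF. lra. }
    unfold Squantile. 
    assert (HI : RInt (fun xi => / (Rpower xi g - Rpower xi h)) F0 F = - RInt (fq g h) F F0).
    { rewrite <- opp_RInt_swap. reflexivity. apply fq_ex_RInt; lra. }
    rewrite HI.
    assert (Hln : RInt (fun x => / x) F F0 = ln F0 - ln F).
    { apply is_RInt_unique. 
      replace (ln F0 - ln F) with (minus (ln F0) (ln F)) by reflexivity.
      apply (is_RInt_derive ln (fun x => / x)).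
      - intros x Hx. rewrite Rmin_left in Hx by lra. rewrite Rmax_right in Hx by lra.
        apply is_derive_ln. lra.
      - intros x Hx. rewrite Rmin_left in Hx by lra. rewrite Rmax_right in Hx by lra.
        apply (ex_derive_continuous (K:=R_AbsRing) (V:=R_NormedModule) (fun x => / x)). auto_derive. lra. }
    assert (Hle : RInt (fun x => / x) F F0 <= RInt (fq g h) F F0).
    { apply RInt_le. lra.
      apply (ex_RInt_continuous (V:=R_CompleteNormedModule)). intros z Hz. rewrite Rmin_left in Hz by lra. rewrite Rmax_right in Hz by lra.
        apply (ex_derive_continuous (K:=R_AbsRing) (V:=R_NormedModule) (fun x => / x)). auto_derive. lra.
      apply fq_ex_RInt; lra.
      intros x Hx. unfold fq. apply Rinv_le_contravar. apply D_pos; lra.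
      assert (Rpower x g <= Rpower x 1) by (apply Rpower_le_small; lra).
      rewrite Rpower_1 in H by lra. pose proof (Rpower_pos x h). lra. }
    assert (0 < / alpha) by (apply Rinv_0_lt_compat; lra).
    nra.
  - apply (filterlim_comp _ _ _ ln (fun y => (X0 - / alpha * ln F0) + / alpha * y) _ (Rbar_locally m_infty)). apply is_lim_ln_0. apply aff_m.
    apply Rinv_0_lt_compat; lra.
Qed.

Lemma exp_le_mono a b : a <= b -> exp a <= exp b.
Proof. intros H. destruct (Req_dec a b). subst; lra. left; apply exp_increasing; lra. Qed.

Lemma D_le g h F0 x : g < h -> 0 < F0 < 1 -> F0 <= x < 1 ->
  Rpower x g - Rpower x h <= (exp (Rabs g * Rabs (ln F0)) * (h - g) / F0) * (1 - x).
Proof.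
  intros Hgh HF0 Hx.
  assert (HL : ln x < 0) by (apply ln_neg; lra).
  assert (HL0 : ln F0 <= ln x) by (apply ln_le; lra).
  set (L := ln x) in *.
  unfold Rpower. fold L.
  set (A := exp (g * L)). set (Z := exp ((h - g) * L)).
  assert (EZ : exp (h * L) = A * Z). { unfold A, Z. rewrite <- exp_plus. f_equal; ring. }
  rewrite EZ.
  assert (HZ : 1 + (h - g) * L <= Z) by apply exp_ineq1_le.
  assert (HA : 0 < A) by apply exp_pos.
  assert (H1 : 1 + - L <= / x).
  { rewrite <- (exp_ln x) by lra. rewrite <- exp_Ropp. apply exp_ineq1_le. }
  assert (H2 : - L <= (1 - x) / F0).
  { assert (/ x - 1 = (1 - x) / x) by (field; lra).
    assert ((1 - x) / x <= (1 - x) / F0).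
    { unfold Rdiv. apply Rmult_le_compat_l. lra. apply Rinv_le_contravar; lra. }
    lra. }
  assert (HE : A <= exp (Rabs g * Rabs (ln F0))).
  { apply exp_le_mono. rewrite (Rabs_left (ln F0)) by lra.
    destruct (Rle_dec 0 g). rewrite Rabs_right by lra. nra. rewrite Rabs_left by lra. nra. }
  assert (HD : A - A * Z <= A * ((h - g) * - L)) by nra.
  assert (A * ((h - g) * - L) <= exp (Rabs g * Rabs (ln F0)) * ((h - g) * ((1 - x) / F0))).
  { apply Rmult_le_compat; try nra. }
  unfold Rdiv in *. nra.
Qed.

Lemma one_minus_lim : filterlim (fun F => 1 - F) (at_left 1) (at_right 0).
Proof.
  intros P [eps HP]. exists eps. intros y Hy Hy1. apply HP. 2: lra.
  unfold ball in *; simpl in *; unfold AbsRing_ball in *; simpl in *.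
  unfold minus, plus, opp in *; simpl in *.
  replace (1 - y + - 0) with (- (y + - 1)) by ring. rewrite Rabs_Ropp. auto.
Qed.

Lemma part3 (alpha g h F0 X0 : R)
  (Halpha : 0 < alpha) (Hgh : g < h) (HF0 : 0 < F0 < 1) :
  filterlim (Squantile alpha g h F0 X0) (at_left 1) (Rbar_locally p_infty).
Proof.
  set (K := exp (Rabs g * Rabs (ln F0)) * (h - g) / F0).
  assert (HK : 0 < K).
  { unfold K. unfold Rdiv. apply Rmult_lt_0_compat. apply Rmult_lt_0_compat. apply exp_pos. lra.
    apply Rinv_0_lt_compat; lra. }
  apply filterlim_ge_p_infty with
    (f := fun F => (X0 + / alpha * (ln (1 - F0) / K)) + (- (/ alpha / K)) * ln (1 - F)).
  - exists (mkposreal (1 - F0) ltac:(lra)). intros F HF HF'.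
    assert (HF1 : F0 < F). { unfold ball in HF; simpl in HF; unfold AbsRing_ball in HF; simpl in HF.
      apply Rabs_lt_between in HF. unfold minus, plus, opp in HF; simpl in HF. lra. }
    unfold Squantile. fold (fq g h).
    assert (Hln : RInt (fun x => / (K * (1 - x))) F0 F = (- ln (1 - F) / K) - (- ln (1 - F0) / K)).
    { apply is_RInt_unique.
      apply (is_RInt_derive (fun x => - ln (1 - x) / K) (fun x => / (K * (1 - x)))).
      - intros x Hx. rewrite Rmin_left in Hx by lra. rewrite Rmax_right in Hx by lra.
        auto_derive. lra. field. split; lra.
      - intros x Hx. rewrite Rmin_left in Hx by lra. rewrite Rmax_right in Hx by lra.
        apply (ex_derive_continuous (K:=R_AbsRing) (V:=R_NormedModule) (fun x => / (K * (1 - x)))).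
        auto_derive. assert (K * (1 - x) > 0) by (apply Rmult_lt_0_compat; lra). lra. }
    assert (Hle : RInt (fun x => / (K * (1 - x))) F0 F <= RInt (fq g h) F0 F).
    { apply RInt_le. lra.
      apply (ex_RInt_continuous (V:=R_CompleteNormedModule)). intros z Hz.
        rewrite Rmin_left in Hz by lra. rewrite Rmax_right in Hz by lra.
        apply (ex_derive_continuous (K:=R_AbsRing) (V:=R_NormedModule) (fun x => / (K * (1 - x)))).
        auto_derive. assert (K * (1 - z) > 0) by (apply Rmult_lt_0_compat; lra). lra.
      apply fq_ex_RInt; lra.
      intros x Hx. unfold fq. apply Rinv_le_contravar. apply D_pos; lra.
      apply D_le; lra. }
    rewrite Hln in Hle.
    assert (0 < / alpha) by (apply Rinv_0_lt_compat; lra).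
    assert (E : / alpha * (ln (1 - F0) / K) + - (/ alpha / K) * ln (1 - F)
              = / alpha * (- ln (1 - F) / K - - ln (1 - F0) / K)) by (field; lra).
    nra.
  - apply (filterlim_comp _ _ _ (fun F => 1 - F) (fun F => (X0 + / alpha * (ln (1 - F0) / K)) + (- (/ alpha / K)) * ln F) _ (at_right 0)).
    apply one_minus_lim.
    apply (filterlim_comp _ _ _ ln (fun y => (X0 + / alpha * (ln (1 - F0) / K)) + (- (/ alpha / K)) * y) _ (Rbar_locally m_infty)).
    apply is_lim_ln_0. apply aff_p.
    assert (0 < / alpha / K). { unfold Rdiv. apply Rmult_lt_0_compat; apply Rinv_0_lt_compat; lra. } lra.
Qed.

Definition coef (lam gam : R) (n : nat) := / (lam + gam * INR n).

Lemma coef_den lam gam n : 0 < lam -> 0 < gam -> 0 < lam + gam * INR n.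
Proof. intros. pose proof (pos_INR n). nra. Qed.

Lemma coef_radius lam gam z : 0 < lam -> 0 < gam -> 0 <= z < 1 ->
  Rbar_lt (Rabs z) (CV_radius (coef lam gam)).
Proof.
  intros Hl Hg Hz.
  destruct (CV_radius_bounded (coef lam gam)) as [Hub Hlub].
  assert (H1 : Rbar_le 1 (CV_radius (coef lam gam))).
  { apply Hub. exists (/ lam). intros n. rewrite pow1, Rmult_1_r.
    unfold coef. rewrite Rabs_right. apply Rinv_le_contravar. lra.
    pose proof (pos_INR n). nra.
    left; apply Rinv_0_lt_compat, coef_den; auto. }
  rewrite Rabs_right by lra.
  destruct (CV_radius (coef lam gam)); simpl in *; auto. lra.
Qed.

Lemma series_identity lam gam z : 0 < lam -> 0 < gam -> 0 <= z < 1 ->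
  lam * PSeries (coef lam gam) z + gam * z * PSeries (PS_derive (coef lam gam)) z = / (1 - z).
Proof.
  intros Hl Hg Hz.
  pose proof (coef_radius lam gam z Hl Hg Hz) as Hr.
  assert (H1 := PSeries_correct _ _ (CV_radius_inside _ _ Hr)).
  assert (H2 := PSeries_correct _ _ (ex_pseries_derive _ _ Hr)).
  apply is_pseries_incr_1 in H2.
  apply (is_pseries_scal gam) in H2; [| apply Rmult_comm].
  apply (is_pseries_scal lam) in H1; [| apply Rmult_comm].
  pose proof (is_pseries_plus _ _ _ _ _ H1 H2) as H3.
  apply (is_pseries_ext _ (fun _ => 1)) in H3.
  - apply is_pseries_unique in H3.
    assert (H4 : is_pseries (fun _ : nat => 1) z (/ (1 - z))).
    { unfold is_pseries. eapply is_series_ext; [|apply is_series_geom].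
      intros n. change (z ^ n = pow_n (K:=R_AbsRing) z n * 1). rewrite Rmult_1_r. induction n as [|n IH]; [reflexivity| simpl; rewrite IH; reflexivity].
      rewrite Rabs_right; lra. }
    apply is_pseries_unique in H4. rewrite H3 in H4. rewrite <- H4.
    unfold plus, scal; simpl; unfold mult; simpl. ring.
  - assert (Hc : forall n : nat, lam * coef lam gam n + gam * (match n with 0%nat => 0 | S m => INR (S m) * coef lam gam (S m) end) = 1).
    { intros n. unfold coef. destruct n as [|m].
      + simpl. field. lra.
      + pose proof (coef_den lam gam (S m) Hl Hg). field. lra. }
    intros n. exact (Hc n).
Qed.

Lemma Rpower_derive c x : 0 < x -> is_derive (fun y => Rpower y c) x (c * Rpower x (c - 1)).
Proof. intros. apply is_derive_Reals. apply derivable_pt_lim_power; auto. Qed.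

Definition Hfun g h x := Rpower x (1 - g) * PSeries (coef (1 - g) (h - g)) (Rpower x (h - g)).

Lemma z_range g h x : g < h -> 0 < x < 1 -> 0 <= Rpower x (h - g) < 1.
Proof. intros. pose proof (Rpower_pos x (h - g)).
  pose proof (Rpower_lt_small x 0 (h - g) H0 ltac:(lra)). rewrite Rpower_O in H2 by lra. lra. Qed.

Lemma H_derive g h x : g < 1 -> g < h -> 0 < x < 1 -> is_derive (Hfun g h) x (fq g h x).
Proof.
  intros Hg Hgh Hx.
  set (a := coef (1 - g) (h - g)).
  set (z := Rpower x (h - g)).
  assert (Hz : 0 <= z < 1) by (apply z_range; auto).
  assert (Hr := coef_radius (1 - g) (h - g) z ltac:(lra) ltac:(lra) Hz).
  pose proof (Rpower_derive (1 - g) x ltac:(lra)) as d1.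
  pose proof (is_derive_comp (PSeries a) (fun y => Rpower y (h - g)) x _ _ (is_derive_PSeries a z Hr) (Rpower_derive (h - g) x ltac:(lra))) as d2.
  pose proof (is_derive_mult _ _ _ _ _ d1 d2 Rmult_comm) as d3.
  match type of d3 with is_derive _ _ ?l => replace (fq g h x) with l end.
  exact d3.
  pose proof (series_identity (1 - g) (h - g) z ltac:(lra) ltac:(lra) Hz) as Hid.
  fold a in Hid.
  set (P := PSeries a z) in *. set (P' := PSeries (PS_derive a) z) in *.
  change (( (1 - g) * Rpower x (1 - g - 1)) * P + Rpower x (1 - g) * (((h - g) * Rpower x (h - g - 1)) * P') = fq g h x).
  unfold fq. unfold z in *. unfold Rpower in *.
  set (L := ln x) in *.
  set (A := exp (g * L)). set (Z := exp ((h - g) * L)) in *.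
  assert (HA : 0 < A) by apply exp_pos.
  assert (e1 : exp ((1 - g - 1) * L) = / A). { unfold A. rewrite <- exp_Ropp. f_equal; ring. }
  assert (e2 : exp ((1 - g) * L) * exp ((h - g - 1) * L) = / A * Z).
  { unfold A, Z. rewrite <- exp_Ropp, <- !exp_plus. f_equal; ring. }
  assert (e3 : exp (h * L) = A * Z). { unfold A, Z. rewrite <- exp_plus. f_equal; ring. }
  rewrite e1, e3.
  replace (exp ((1 - g) * L) * ((h - g) * exp ((h - g - 1) * L) * P'))
    with ((h - g) * (exp ((1 - g) * L) * exp ((h - g - 1) * L)) * P') by ring.
  rewrite e2.
  replace ((1 - g) * / A * P + (h - g) * (/ A * Z) * P') with (/ A * ((1 - g) * P + (h - g) * Z * P')) by ring.
  rewrite Hid. field. assert (0 < A * (1 - Z)) by (apply Rmult_lt_0_compat; lra). repeat split; nra.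
Qed.

Lemma Rpower_lim0 c : 0 < c -> filterlim (fun x => Rpower x c) (at_right 0) (locally 0).
Proof.
  intros Hc.
  apply (filterlim_ext (fun x => exp (0 + c * ln x))).
  { intros x. unfold Rpower. f_equal; ring. }
  apply (filterlim_comp _ _ _ ln (fun y => exp (0 + c * y)) _ (Rbar_locally m_infty)).
  apply is_lim_ln_0.
  apply (filterlim_comp _ _ _ (fun y => 0 + c * y) exp _ (Rbar_locally m_infty)).
  apply aff_m; auto.
  exact is_lim_exp_m.
Qed.

Lemma H_lim g h : g < 1 -> g < h -> filterlim (Hfun g h) (at_right 0) (locally 0).
Proof.
  intros Hg Hgh.
  set (a := coef (1 - g) (h - g)).
  assert (Hc : filterlim (PSeries a) (locally 0) (locally (PSeries a 0))).
  { apply continuity_pt_filterlim. apply PSeries_continuity.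
    apply coef_radius; lra. }
  assert (H2 : filterlim (fun x => PSeries a (Rpower x (h - g))) (at_right 0) (locally (PSeries a 0))).
  { apply (filterlim_comp _ _ _ (fun x => Rpower x (h - g)) (PSeries a) _ (locally 0)).
    apply Rpower_lim0; lra. exact Hc. }
  pose proof (Rpower_lim0 (1 - g) ltac:(lra)) as H1.
  replace 0 with (mult 0 (PSeries a 0)) at 2 by (unfold mult; simpl; ring).
  unfold Hfun.
  apply (filterlim_comp_2 _ _ mult H1 H2).
  apply (filterlim_mult (K:=R_AbsRing)).
Qed.

Lemma P_value lam gam z : 0 < lam -> 0 < gam -> 0 <= z < 1 ->
  PSeries (coef lam gam) z = / lam + z / gam * LerchPhi z 1 (1 + lam / gam).
Proof.
  intros Hl Hg Hz.
  assert (Hr := coef_radius lam gam z Hl Hg Hz).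
  assert (Hex : ex_series (fun k => coef lam gam k * z ^ k)).
  { apply ex_series_Rabs. apply CV_disk_inside; auto. }
  unfold PSeries. rewrite Series_incr_1 by auto.
  unfold LerchPhi. rewrite <- Series_scal_l.
  f_equal.
  - unfold coef. simpl. field. lra.
  - apply Series_ext. intros n. unfold coef.
    pose proof (pos_INR n).
    rewrite Rpower_1.
    2:{ assert (0 < lam / gam) by (unfold Rdiv; apply Rmult_lt_0_compat; [lra| apply Rinv_0_lt_compat; lra]). lra. }
    rewrite S_INR. simpl.
    field. split; nra.
Qed.

Lemma RInt_H g h F0 F : g < 1 -> g < h -> 0 < F0 < 1 -> 0 < F < 1 ->
  RInt (fq g h) F0 F = Hfun g h F - Hfun g h F0.
Proof.
  intros Hg Hgh HF0 HF.
  apply is_RInt_unique.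
  apply (is_RInt_derive (Hfun g h) (fq g h)).
  - intros x Hx. apply H_derive; auto. split.
    eapply Rlt_le_trans; [|apply Hx]. apply Rmin_case; lra.
    eapply Rle_lt_trans; [apply Hx|]. apply Rmax_case; lra.
  - intros x Hx. apply fq_cont; auto. split.
    eapply Rlt_le_trans; [|apply Hx]. apply Rmin_case; lra.
    eapply Rle_lt_trans; [apply Hx|]. apply Rmax_case; lra.
Qed.

Lemma part2 (alpha g h F0 X0 : R)
  (Halpha : 0 < alpha) (Hgh : g < h) (HF0 : 0 < F0 < 1) :
  (g < 1 ->
     let gamma := h - g in
     let lambda := 1 - g in
     filterlim (Squantile alpha g h F0 X0) (at_right 0)
       (locally (X0 - Rpower F0 lambda / (alpha * lambda) *
                  (1 + lambda * Rpower F0 gamma / gamma *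
                       LerchPhi (Rpower F0 gamma) 1 (1 + lambda / gamma))))).
Proof.
  intros Hg gamma lambda.
  assert (Hval : X0 - Rpower F0 lambda / (alpha * lambda) *
                  (1 + lambda * Rpower F0 gamma / gamma *
                       LerchPhi (Rpower F0 gamma) 1 (1 + lambda / gamma))
           = X0 + / alpha * (0 - Hfun g h F0)).
  { unfold Hfun. fold lambda gamma.
    rewrite P_value; try (unfold lambda, gamma; lra).
    2: apply z_range; auto.
    unfold lambda, gamma. field. lra. }
  rewrite Hval.
  apply (filterlim_ext_loc (fun F => X0 + / alpha * (Hfun g h F - Hfun g h F0))).
  - exists (mkposreal 1 ltac:(lra)). intros F HF HF'.
    assert (HF1 : F < 1). { unfold ball in HF; simpl in HF; unfold AbsRing_ball in HF; simpl in HF.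
      apply Rabs_lt_between in HF. unfold minus, plus, opp in HF; simpl in HF. lra. }
    unfold Squantile. fold (fq g h). rewrite RInt_H; auto.
  - apply (filterlim_comp _ _ _ (Hfun g h) (fun y => X0 + / alpha * (y - Hfun g h F0)) _ (locally 0)).
    apply H_lim; auto.
    apply (ex_derive_continuous (K:=R_AbsRing) (V:=R_NormedModule) (fun y => X0 + / alpha * (y - Hfun g h F0))).
    auto_derive. auto.
Qed.

Theorem mainTheorem4 (alpha g h F0 X0 : R)
  (Halpha : 0 < alpha) (Hgh : g < h) (HF0 : 0 < F0 < 1) :
  (1 <= g ->
     filterlim (Squantile alpha g h F0 X0) (at_right 0) (Rbar_locally m_infty)) /\
  (g < 1 ->
     let gamma := h - g in
     let lambda := 1 - g in
     filterlim (Squantile alpha g h F0 X0) (at_right 0)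
       (locally (X0 - Rpower F0 lambda / (alpha * lambda) *
                  (1 + lambda * Rpower F0 gamma / gamma *
                       LerchPhi (Rpower F0 gamma) 1 (1 + lambda / gamma))))) /\
  filterlim (Squantile alpha g h F0 X0) (at_left 1) (Rbar_locally p_infty).
Proof.
  split; [|split].
  - apply part1; auto.
  - apply part2; auto.
  - apply part3; auto.
Qed.
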